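(* Let $n\ge 0$, let $T$ be a triangulation of a regular polygon with $n+3$ vertices and let $\alpha,\alpha'$ be positive roots. Then $\operatorname{Supp}\alpha\cap\operatorname{Supp}\alpha'$ is connected as a subset of the (underlying graph of the) quiver ${Q}_T$.
   Context: Diagonals of the polygon are called roots; those in $T$ are negative roots, indexed by a set $I$ (the one indexed by $i$ written $-\alpha_i$), and the others positive roots. $\operatorname{Supp}\alpha$ is the set of $i\in I$ with $-\alpha_i$ crossing $\alpha$. The quiver ${Q}_T$ has vertex set $I$, with an arrow between $i$ and $j$ exactly when $-\alpha_i$ and $-\alpha_j$ bound a common triangle of $T$. *)

(* Defs.v *)
From mathcomp Require Import all_boot.
Set Implicit Arguments. Unset Strict Implicit. Unset Printing Implicit Defensive.

(* Vertices of a regular polygon with N vertices are 'I_N, in cyclic order.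
   A segment between two vertices is encoded as a pair (a, b) with a < b. *)
Section Polygon.
Variable N : nat.
Definition seg := ('I_N * 'I_N)%type.

Definition is_side (s : seg) : bool :=
  (s.1 < s.2) && ((s.2 == s.1.+1 :> nat) || ((s.1 == 0 :> nat) && (s.2 == N.-1 :> nat))).

(* diagonals (= roots): segments between two distinct non-adjacent vertices *)
Definition is_diag (s : seg) : bool := (s.1 < s.2) && ~~ is_side s.

Definition cross (s t : seg) : bool :=
  ((s.1 < t.1 < s.2) && (s.2 < t.2)) || ((t.1 < s.1 < t.2) && (t.2 < s.2)).

Definition triangulation (T : {set seg}) : Prop :=
  [/\ forall s, s \in T -> is_diag s,
      forall s t, s \in T -> t \in T -> ~~ cross s t
    & forall s, is_diag s -> s \notin T -> exists2 t, t \in T & cross s t].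

Definition T_edge (T : {set seg}) (s : seg) : bool := is_side s || (s \in T).

(* arrow (in either direction) of the quiver Q_T between the negative roots
   s and t of T: s != t and they bound a common triangle of T *)
Definition quiver_adj (T : {set seg}) (s t : seg) : bool :=
  (s != t) &&
  [exists x : 'I_N, exists y : 'I_N, exists z : 'I_N,
     [&& x < y, y < z,
         T_edge T (x, y), T_edge T (y, z), T_edge T (x, z),
         s \in [:: (x, y); (y, z); (x, z)] &
         t \in [:: (x, y); (y, z); (x, z)]]].

(* support of a root alpha: negative roots (elements of T) crossing alpha *)
Definition Supp (T : {set seg}) (alpha : seg) : {set seg} :=
  [set s in T | cross s alpha].

(* S is connected in the underlying graph of Q_T (the empty set counts as connected) *)
Definition connected_in_quiver (T : {set seg}) (S : {set seg}) : Prop :=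
  forall u v, u \in S -> v \in S ->
    exists p : seq seg, [/\ path (quiver_adj T) u p, last u p = v & all (fun w => w \in S) p].
End Polygon.

(* Main.v *)
Require Import Defs.
From mathcomp Require Import all_boot.
From mathcomp Require Import zify.
Set Implicit Arguments. Unset Strict Implicit. Unset Printing Implicit Defensive.

Definition SS N (T : {set seg N}) (a a' : seg N) := Supp T a :&: Supp T a'.

Lemma inSS N (T : {set seg N}) a a' s :
  (s \in SS T a a') = [&& s \in T, cross s a & cross s a'].
Proof. rewrite /SS in_setI !inE; by case: (s \in T). Qed.

Lemma side_nocross N (s t : seg N) : is_side s -> ~~ cross s t.
Proof.
case: s t => [a b] [c d]; rewrite /is_side /cross /=.
have := ltn_ord b; have := ltn_ord c; have := ltn_ord d. lia.
Qed.

Lemma tedge_nocross N (T : {set seg N}) s t :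
  triangulation T -> T_edge T s -> t \in T -> ~~ cross s t.
Proof.
case=> _ Hnc _; rewrite /T_edge => /orP [/side_nocross|] //.
by move=> Hs Ht; apply: Hnc.
Qed.

Lemma tedge_cross_in N (T : {set seg N}) s a :
  T_edge T s -> cross s a -> s \in T.
Proof.
rewrite /T_edge => /orP [Hs|] //. by rewrite (negbTE (side_nocross a Hs)).
Qed.

Lemma inT_diag N (T : {set seg N}) s : triangulation T -> s \in T -> is_diag s.
Proof. by case=> H _ _; apply: H. Qed.

Lemma triangle N (T : {set seg N}) (x z : 'I_N) :
  triangulation T -> T_edge T (x, z) -> x.+1 < z ->
  exists y : 'I_N, [/\ x < y, y < z, T_edge T (x, y) & T_edge T (y, z)].
Proof.
move=> HT Hxz Hlt.
have x1N : x.+1 < N by have := ltn_ord z; lia.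
pose y0 := Ordinal x1N.
pose P := fun y : 'I_N => (x < y < z) && T_edge T (x, y).
have P0 : P y0.
  rewrite /P /=; apply/andP; split; first by lia.
  apply/orP; left; rewrite /is_side /=; lia.
case: (arg_maxnP (fun y : 'I_N => val y) P0) => y /andP [Hy Hxy] Hmax.
exists y; move/andP: (Hy) => [Hy1 Hy2]; split => //.
case: (boolP (T_edge T (y, z))) => // Hn; exfalso.
move: Hn; rewrite /T_edge negb_or => /andP [Hns Hnot].
have Hd : is_diag (y, z) by rewrite /is_diag Hns andbT /=; lia.
have HT' := HT; case: HT' => Hdiag Hnc Hmaxl.
case: (Hmaxl _ Hd Hnot) => t Ht Hc.
have h1 := tedge_nocross HT Hxz Ht.
have h2 := tedge_nocross HT Hxy Ht.
have h3 := Hdiag _ Ht.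
move: Ht Hc h1 h2 h3; case: t => [p q] Ht Hc h1 h2 h3.
case: (eqVneq (nat_of_ord p) (nat_of_ord x)) => Hpx.
- have Pq : P q.
    rewrite /P; apply/andP; split.
      move: Hc h3; rewrite /cross /is_diag /is_side /=; lia.
    have -> : x = p by apply: val_inj.
    by rewrite /T_edge Ht orbT.
  have := Hmax q Pq; move: Hc h3; rewrite /cross /is_diag /is_side /=; lia.
- move: Hc h1 h2 h3; rewrite /cross /is_diag /is_side /=. lia.
Qed.

Lemma adj_tri N (T : {set seg N}) (x y z : 'I_N) s t :
  x < y -> y < z -> T_edge T (x, y) -> T_edge T (y, z) -> T_edge T (x, z) ->
  s \in [:: (x, y); (y, z); (x, z)] -> t \in [:: (x, y); (y, z); (x, z)] ->
  s != t -> quiver_adj T s t.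
Proof.
move=> Hxy Hyz E1 E2 E3 Hs Ht Hst; rewrite /quiver_adj Hst /=.
apply/existsP; exists x; apply/existsP; exists y; apply/existsP; exists z.
by rewrite Hxy Hyz E1 E2 E3 Hs Ht.
Qed.

Definition pathP N (T : {set seg N}) a a' (u w : seg N) :=
  exists p, [/\ path (quiver_adj T) u p, last u p = w &
                all (fun s => s \in Supp T a :&: Supp T a') p].

Lemma extend N (T : {set seg N}) a a' (w w' u : seg N) :
  quiver_adj T w w' -> quiver_adj T w' w -> w \in SS T a a' -> w' \in SS T a a' ->
  pathP T a a' u w' /\ pathP T a a' w' u -> pathP T a a' u w /\ pathP T a a' w u.
Proof.
move=> A1 A2 Sw Sw' [[p [P1 P2 P3]] [q [Q1 Q2 Q3]]]; split.
- exists (rcons p w); rewrite rcons_path last_rcons all_rcons P1 P2 A2 P3.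
  by move: Sw; rewrite /SS => ->.
- exists (w' :: q); rewrite /= A1 Q1 Q2 Q3; split => //.
  by move: Sw'; rewrite /SS => ->.
Qed.

Lemma pne N (x y z : 'I_N) : nat_of_ord y != nat_of_ord z -> ((x, y) != (x, z)) && ((y, x) != (z, x)).
Proof.
move=> H; apply/andP; split; apply/negP => /eqP [] E; by rewrite E eqxx in H.
Qed.

Lemma descent N (T : {set seg N}) a a' (HT : triangulation T) k :
  forall (w u : seg N), w.2 - w.1 <= k -> w \in SS T a a' -> u \in SS T a a' ->
  w.1 <= u.1 -> u.2 <= w.2 -> pathP T a a' u w /\ pathP T a a' w u.
Proof.
elim: k => [|k IH] w u Hk Hw Hu H1 H2.
all: case: (eqVneq u w) => [->|Hne]; first by split; exists [::].
all: move: Hk Hw Hu H1 H2 Hne; case: w => [x z]; case: u => [c d] /= Hk Hw Hu H1 H2 Hne.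
all: have Hne' : (nat_of_ord c != nat_of_ord x) || (nat_of_ord d != nat_of_ord z);
  first by (rewrite -negb_and; apply: contra Hne => /andP [/eqP E1 /eqP E2];
        apply/eqP; congr pair; apply: val_inj).
all: move: (Hw) (Hu); rewrite !inSS => /and3P [HwT Hwa Hwa'] /and3P [HuT Hua Hua'].
all: have Dw := inT_diag HT HwT; have Du := inT_diag HT HuT.
all: move: Dw Du; rewrite /is_diag /= => /andP [Dw _] /andP [Du _].
all: clear Hne.
- clear -Hk Hne' H1 H2 Du Dw; lia.
have Ew : T_edge T (x, z) by rewrite /T_edge HwT orbT.
have [y [Hxy Hyz Exy Eyz]] := triangle HT Ew ltac:(lia).
have n1 := tedge_nocross HT Exy HuT.
have n2 := tedge_nocross HT Eyz HuT.
have : (d <= y) || (y <= c) by move: n1 n2; rewrite /cross /=; clear -Hxy Hyz H1 H2 Hne' Du Dw; lia.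
case/orP => Hc.
- have Sw' : (x, y) \in SS T a a'.
    have ca : cross (x, y) a by move: Hwa Hua; rewrite /cross /=;clear -Hxy Hyz H1 H2 Hc Du Dw; lia.
    have ca' : cross (x, y) a' by move: Hwa' Hua'; rewrite /cross /=;clear -Hxy Hyz H1 H2 Hc Du Dw; lia.
    by rewrite inSS ca ca' (tedge_cross_in Exy ca).
  have /andP [ne1 ne2] := @pne N x y z ltac:(clear -Hyz; lia).
  apply: (extend _ _ Hw Sw').
  + apply: (adj_tri Hxy Hyz Exy Eyz Ew); rewrite ?inE ?eqxx ?orbT //.
    by rewrite eq_sym.
  + apply: (adj_tri Hxy Hyz Exy Eyz Ew); by rewrite ?inE ?eqxx ?orbT.
  apply: IH => //=; clear -Hk Hxy Hyz Hc H1 H2; lia.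
- have Sw' : (y, z) \in SS T a a'.
    have ca : cross (y, z) a by move: Hwa Hua; rewrite /cross /=;clear -Hxy Hyz H1 H2 Hc Du Dw; lia.
    have ca' : cross (y, z) a' by move: Hwa' Hua'; rewrite /cross /=;clear -Hxy Hyz H1 H2 Hc Du Dw; lia.
    by rewrite inSS ca ca' (tedge_cross_in Eyz ca).
  have ne : (x, z) != (y, z).
    apply/negP => /eqP [] E; move: Hxy; by rewrite E ltnn.
  apply: (extend _ _ Hw Sw').
  + apply: (adj_tri Hxy Hyz Exy Eyz Ew); by rewrite ?inE ?eqxx ?orbT.
  + apply: (adj_tri Hxy Hyz Exy Eyz Ew); rewrite ?inE ?eqxx ?orbT //.
    by rewrite eq_sym.
  apply: IH => //=; clear -Hk Hxy Hyz Hc H1 H2; lia.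
Qed.
Lemma join N (T : {set seg N}) a a' (HT : triangulation T) (u v A B : seg N) :
  u \in SS T a a' -> v \in SS T a a' -> A \in SS T a a' -> B \in SS T a a' ->
  A.1 <= u.1 -> u.2 <= A.2 -> B.1 <= v.1 -> v.2 <= B.2 -> quiver_adj T A B ->
  pathP T a a' u v.
Proof.
move=> Su Sv SA SB h1 h2 h3 h4 AB.
have [[p1 [P1 P2 P3]] _] := descent HT (leqnn _) SA Su h1 h2.
have [_ [p2 [Q1 Q2 Q3]]] := descent HT (leqnn _) SB Sv h3 h4.
exists (p1 ++ B :: p2); rewrite cat_path last_cat all_cat /= P1 P2 AB Q1 Q2 P3 Q3.
by move: SB; rewrite /SS => ->.
Qed.

Lemma segne N (x y z : 'I_N) : x < y -> (x, y) != (y, z).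
Proof. move=> H; apply/negP => /eqP [] E _; by rewrite E ltnn in H. Qed.

Lemma sub_cross N (x y z c d e f : 'I_N) (a : seg N) :
  x <= c -> d <= y -> y <= e -> f <= z -> c < d -> e < f ->
  cross (c, d) a -> cross (e, f) a -> cross (x, y) a && cross (y, z) a.
Proof. rewrite /cross /=; lia. Qed.

Theorem mainTheorem11 (n : nat) (T : {set seg n.+3}) (alpha alpha' : seg n.+3) :
  triangulation T ->
  is_diag alpha -> alpha \notin T ->
  is_diag alpha' -> alpha' \notin T ->
  connected_in_quiver T (Supp T alpha :&: Supp T alpha').
Proof.
move=> HT _ _ _ _ u v Hu Hv.
have {}Hu : u \in SS T alpha alpha' := Hu.
have {}Hv : v \in SS T alpha alpha' := Hv.
suff : pathP T alpha alpha' u v by [].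
move: (Hu) (Hv); rewrite !inSS => /and3P [HuT Hua Hua'] /and3P [HvT Hva Hva'].
have Du := inT_diag HT HuT; have Dv := inT_diag HT HvT.
have nc : ~~ cross u v by case: HT => _ H _; apply: H.
move: Hu Hv HuT HvT Hua Hua' Hva Hva' Du Dv nc.
case: u => [c d]; case: v => [e f] Hu Hv HuT HvT Hua Hua' Hva Hva' Du Dv nc.
move: Du Dv; rewrite /is_diag /= => /andP [Du _] /andP [Dv _].
case: (boolP ((e <= c) && (d <= f))) => [/andP [h1 h2]|Hn1].
  by have [] := descent HT (leqnn _) Hv Hu h1 h2.
case: (boolP ((c <= e) && (f <= d))) => [/andP [h1 h2]|Hn2].
  by have [] := descent HT (leqnn _) Hu Hv h1 h2.
have Hdj : (d <= e) || (f <= c).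
  move: nc Hn1 Hn2; rewrite /cross /=; clear -Du Dv; lia.
pose P := fun w : seg n.+3 => [&& T_edge T w, w.1 <= minn c e & maxn d f <= w.2].
have P0 : P (ord0, ord_max).
  apply/and3P; split; first (by apply/orP; left; rewrite /is_side /=; lia);
  rewrite /=; have := ltn_ord d; have := ltn_ord f; lia.
case: (arg_minnP (fun w : seg n.+3 => w.2 - w.1) P0) => [[x z]] /and3P [Ew Hw1 Hw2] Hmin.
move: Hw1 Hw2 Hmin => /= Hw1 Hw2 Hmin.
have [y [Hxy Hyz Exy Eyz]] := triangle HT Ew ltac:(clear -Hw1 Hw2 Du Dv Hdj; lia).
have n1 := tedge_nocross HT Exy HuT.
have n2 := tedge_nocross HT Eyz HuT.
have n3 := tedge_nocross HT Exy HvT.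
have n4 := tedge_nocross HT Eyz HvT.
have hu : (d <= y) || (y <= c).
  move: n1 n2; rewrite /cross /=; clear -Hxy Hyz Hw1 Hw2 Du Dv Hdj; lia.
have hv : (f <= y) || (y <= e).
  move: n3 n4; rewrite /cross /=; clear -Hxy Hyz Hw1 Hw2 Du Dv Hdj; lia.
have Sxy : forall g h, T_edge T (g, h) ->
    cross (g, h) alpha -> cross (g, h) alpha' -> (g, h) \in SS T alpha alpha'.
  by move=> g h E c1 c2; rewrite inSS c1 c2 (tedge_cross_in E c1).
case/orP: hu => hu; case/orP: hv => hv.
- have := Hmin (x, y); rewrite /P Exy /=.
  have -> : x <= minn c e by [].
  have -> : maxn d f <= y by rewrite geq_max hu hv.
  move=> /(_ isT); clear -Hxy Hyz; lia.
- have /andP [ca cb] := @sub_cross _ x y z c d e f alpha ltac:(clear -Hw1; lia)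
    hu hv ltac:(clear -Hw2; lia) Du Dv Hua Hva.
  have /andP [ca' cb'] := @sub_cross _ x y z c d e f alpha' ltac:(clear -Hw1; lia)
    hu hv ltac:(clear -Hw2; lia) Du Dv Hua' Hva'.
  apply: (join HT Hu Hv (Sxy _ _ Exy ca ca') (Sxy _ _ Eyz cb cb')) => //=;
    try (clear -Hw1 Hw2 hu hv; lia).
  apply: (adj_tri Hxy Hyz Exy Eyz Ew); rewrite ?inE ?eqxx ?orbT //.
  exact: segne.
- have /andP [ca cb] := @sub_cross _ x y z e f c d alpha ltac:(clear -Hw1; lia)
    hv hu ltac:(clear -Hw2; lia) Dv Du Hva Hua.
  have /andP [ca' cb'] := @sub_cross _ x y z e f c d alpha' ltac:(clear -Hw1; lia)
    hv hu ltac:(clear -Hw2; lia) Dv Du Hva' Hua'.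
  apply: (join HT Hu Hv (Sxy _ _ Eyz cb cb') (Sxy _ _ Exy ca ca')) => //=;
    try (clear -Hw1 Hw2 hu hv; lia).
  apply: (adj_tri Hxy Hyz Exy Eyz Ew); rewrite ?inE ?eqxx ?orbT //.
  by rewrite eq_sym; exact: segne.
- have := Hmin (y, z); rewrite /P Eyz /=.
  have -> : y <= minn c e by rewrite leq_min hu hv.
  have -> : maxn d f <= z by [].
  move=> /(_ isT); clear -Hxy Hyz; lia.
Qed.
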